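(* Let $n\neq 1$ be a real number, $k_n=n-1$, and $k_0,k_1,k_2\in\mathbb{R}$. On the phase space with canonical coordinates $(r,\phi,p_r,p_\phi)$, $r>0$, restricted to the open set where $\cos(k_n\phi)\sin(k_n\phi)\neq 0$, consider $$H_{na}=\tfrac12 r^{2n}\Big(p_r^2+\tfrac{p_\phi^2}{r^2}\Big)+\frac{k_0}{r^{2k_n}}+r^{2k_n}\Big(\frac{k_1}{\cos^2(k_n\phi)}+\frac{k_2}{\sin^2(k_n\phi)}\Big).$$ With $P_1=r^n\big(p_r\cos(k_n\phi)+\tfrac1r p_\phi\sin(k_n\phi)\big)$ and $P_2=r^n\big(p_r\sin(k_n\phi)-\tfrac1r p_\phi\cos(k_n\phi)\big)$, the functions $$J_{a1}=P_1^2+\frac{2k_0}{r^{2k_n}}\cos^2(k_n\phi)+2k_1r^{2k_n}\sec^2(k_n\phi),\qquad J_{a2}=P_2^2+\frac{2k_0}{r^{2k_n}}\sin^2(k_n\phi)+2k_2r^{2k_n}\csc^2(k_n\phi),$$ $$J_{a3}=p_\phi^2+2\Big(\frac{k_1}{\cos^2(k_n\phi)}+\frac{k_2}{\sin^2(k_n\phi)}\Big)$$ are three independent constants of motion of $H_{na}$, i.e. $\{J_{aj},H_{na}\}=0$ for $j=1,2,3$; hence $H_{na}$ is superintegrable.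
   Context: The Poisson bracket is the canonical one in $(r,\phi,p_r,p_\phi)$. A constant of motion of $H$ is a function $F$ with $\{F,H\}=0$. Superintegrable: admits, besides $H$, two further functionally independent constants of motion. *)

(* Defs.v *)
From Stdlib Require Import Reals.
From Coquelicot Require Import Coquelicot.
Open Scope R_scope.

Definition phasefun := R -> R -> R -> R -> R.

Definition d_r    (F : phasefun) r f pr pf := Derive (fun x => F x f pr pf) r.
Definition d_phi  (F : phasefun) r f pr pf := Derive (fun x => F r x pr pf) f.
Definition d_pr   (F : phasefun) r f pr pf := Derive (fun x => F r f x pf) pr.
Definition d_pphi (F : phasefun) r f pr pf := Derive (fun x => F r f pr x) pf.

Definition poisson (F G : phasefun) r f pr pf :=
  d_r F r f pr pf * d_pr G r f pr pf - d_pr F r f pr pf * d_r G r f pr pf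
  + d_phi F r f pr pf * d_pphi G r f pr pf - d_pphi F r f pr pf * d_phi G r f pr pf.

Definition kn (n : R) := n - 1.
Definition domain (n : R) r f (pr pf : R) : Prop :=
  0 < r /\ cos (kn n * f) * sin (kn n * f) <> 0.

Definition constant_of_motion (n : R) (H F : phasefun) : Prop :=
  forall r f pr pf, domain n r f pr pf -> poisson F H r f pr pf = 0.

Definition grad_indep3 (F1 F2 F3 : phasefun) r f pr pf : Prop :=
  forall a b c : R,
    a * d_r F1 r f pr pf + b * d_r F2 r f pr pf + c * d_r F3 r f pr pf = 0 ->
    a * d_phi F1 r f pr pf + b * d_phi F2 r f pr pf + c * d_phi F3 r f pr pf = 0 ->
    a * d_pr F1 r f pr pf + b * d_pr F2 r f pr pf + c * d_pr F3 r f pr pf = 0 ->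
    a * d_pphi F1 r f pr pf + b * d_pphi F2 r f pr pf + c * d_pphi F3 r f pr pf = 0 ->
    a = 0 /\ b = 0 /\ c = 0.

(* Functional independence: the Jacobian of (F1,F2,F3) has full rank 3 on a
   dense subset of the domain (that subset is automatically open). *)
Definition functionally_independent3 (n : R) (F1 F2 F3 : phasefun) : Prop :=
  forall r f pr pf, domain n r f pr pf -> forall eps : R, 0 < eps ->
    exists r' f' pr' pf',
      domain n r' f' pr' pf' /\
      Rabs (r' - r) < eps /\ Rabs (f' - f) < eps /\
      Rabs (pr' - pr) < eps /\ Rabs (pf' - pf) < eps /\
      grad_indep3 F1 F2 F3 r' f' pr' pf'.

Definition superintegrable (n : R) (H : phasefun) : Prop :=
  exists F1 F2 : phasefun,
    constant_of_motion n H F1 /\ constant_of_motion n H F2 /\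
    functionally_independent3 n H F1 F2.

Definition Hna (n k0 k1 k2 : R) : phasefun := fun r f pr pf =>
  / 2 * Rpower r (2 * n) * (pr ^ 2 + pf ^ 2 / r ^ 2)
  + k0 / Rpower r (2 * kn n)
  + Rpower r (2 * kn n) * (k1 / cos (kn n * f) ^ 2 + k2 / sin (kn n * f) ^ 2).

Definition P1 (n : R) : phasefun := fun r f pr pf =>
  Rpower r n * (pr * cos (kn n * f) + / r * pf * sin (kn n * f)).
Definition P2 (n : R) : phasefun := fun r f pr pf =>
  Rpower r n * (pr * sin (kn n * f) - / r * pf * cos (kn n * f)).

Definition Ja1 (n k0 k1 k2 : R) : phasefun := fun r f pr pf =>
  P1 n r f pr pf ^ 2 + 2 * k0 / Rpower r (2 * kn n) * cos (kn n * f) ^ 2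
  + 2 * k1 * Rpower r (2 * kn n) / cos (kn n * f) ^ 2.
Definition Ja2 (n k0 k1 k2 : R) : phasefun := fun r f pr pf =>
  P2 n r f pr pf ^ 2 + 2 * k0 / Rpower r (2 * kn n) * sin (kn n * f) ^ 2
  + 2 * k2 * Rpower r (2 * kn n) / sin (kn n * f) ^ 2.
Definition Ja3 (n k0 k1 k2 : R) : phasefun := fun r f pr pf =>
  pf ^ 2 + 2 * (k1 / cos (kn n * f) ^ 2 + k2 / sin (kn n * f) ^ 2).

(* Main.v *)
Require Import Defs.
From Stdlib Require Import Reals.
From Coquelicot Require Import Coquelicot.
Open Scope R_scope.
From Stdlib Require Import Lra Field.
Lemma Rpow_pos r a : 0 < Rpower r a.
Proof. unfold Rpower; apply exp_pos. Qed.

Lemma DRpow r a : 0 < r -> Derive (fun x => Rpower x a) r = a * Rpower r a / r.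
Proof.
  intros hr. apply is_derive_unique.
  apply is_derive_Reals. 
  replace (a * Rpower r a / r) with (a * Rpower r (a - 1)).
  now apply derivable_pt_lim_power.
  unfold Rminus; rewrite Rpower_plus, Rpower_Ropp, Rpower_1 by lra. field. lra.
Qed.

Lemma exRpow r a : 0 < r -> ex_derive (fun x => Rpower x a) r.
Proof. intros hr. exists (a * Rpower r (a - 1)). apply is_derive_Reals.
  now apply derivable_pt_lim_power. Qed.

Lemma Rpow2 r a : Rpower r (2 * a) = Rpower r a ^ 2.
Proof. replace (2*a) with (a+a) by ring. rewrite Rpower_plus. ring. Qed.

Lemma Rpow2m r n : 0 < r -> Rpower r (2 * kn n) = Rpower r n ^ 2 / r ^ 2.
Proof. intros hr. unfold kn. replace (2*(n-1)) with (2*n + Ropp 2) by ring.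
  rewrite Rpower_plus, Rpower_Ropp, Rpow2.
  assert (E: Rpower r 2 = r ^ 2).
  { replace 2 with (INR 2) at 1 by (simpl; ring). now rewrite Rpower_pow. }
  rewrite E.
  field. lra. Qed.

Lemma Derive_eq g x l : is_derive g x l -> Derive g x = l.
Proof. apply is_derive_unique. Qed.

Ltac side hr hcs := repeat split; try (apply exRpow; exact hr); try lra;
  try (apply Rgt_not_eq; apply Rpow_pos);
  repeat apply Rmult_integral_contrapositive_currified; try assumption; try lra;
  try (apply Rgt_not_eq; apply Rpow_pos).

Lemma tparam c s : c ^ 2 + s ^ 2 = 1 -> 1 + c <> 0 ->
  c = (1 - (s/(1+c))^2) / (1 + (s/(1+c))^2) /\ s = 2 * (s/(1+c)) / (1 + (s/(1+c))^2).
Proof.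
  intros h1 h2. assert (hs: s^2 = 1 - c^2) by lra.
  replace ((s/(1+c))^2) with (s^2/(1+c)^2) by (field; exact h2).
  rewrite hs.
  assert (h4 : (1+c)^2 + (1 - c^2) <> 0) by (intro HH; apply h2; nra).
  split; field; split; auto.
Qed.

Ltac dstep hr hcs := erewrite Derive_eq; [ | auto_derive; [ .. | reflexivity ]; side hr hcs ];
   try rewrite !DRpow by exact hr.

Ltac alg r n f :=
try rewrite !Rpow2m by assumption; try rewrite !Rpow2;
assert (hx : 0 < Rpower r n) by apply Rpow_pos;
generalize dependent (Rpower r n); intros x hx;
assert (hcs1 : cos (kn n * f) ^ 2 + sin (kn n * f) ^ 2 = 1) by (rewrite <- (sin2_cos2 (kn n * f)); unfold Rsqr; ring);
unfold kn in *;
generalize dependent (cos ((n-1)*f)); generalize dependent (sin ((n-1)*f)); intros s hs c hc hcs hcs1;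
assert (h1c : 1 + c <> 0) by (let HH := fresh in intro HH; assert (c = -1) by lra; subst c; apply hs; nra);
destruct (tparam c s hcs1 h1c) as [Ec Es];
generalize dependent (s/(1+c)); intros t Ec Es; subst c s;
assert (ht2 : 1 + t^2 <> 0) by nra;
assert (ht : t <> 0) by (let HH := fresh in intro HH; apply hs; unfold Rdiv; rewrite HH; ring);
assert (ht1 : 1 - t^2 <> 0) by (let HH := fresh in intro HH; apply hcs; unfold Rdiv; rewrite HH; ring);
field; repeat split; auto; lra.

Lemma bJa3 : forall n k0 k1 k2 r f pr pf, Defs.domain n r f pr pf -> poisson (Ja3 n k0 k1 k2) (Hna n k0 k1 k2) r f pr pf = 0.
intros n k0 k1 k2 r f pr pf [hr hcs].
assert (hc : cos (kn n * f) <> 0) by (intro HH; apply hcs; rewrite HH; ring).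
assert (hs : sin (kn n * f) <> 0) by (intro HH; apply hcs; rewrite HH; ring).
assert (hr0 : r <> 0) by lra.
unfold poisson, d_r, d_phi, d_pr, d_pphi, Ja3, Hna.
repeat dstep hr hcs.
alg r n f.
Qed.


Lemma bJa1 : forall n k0 k1 k2 r f pr pf, Defs.domain n r f pr pf -> poisson (Ja1 n k0 k1 k2) (Hna n k0 k1 k2) r f pr pf = 0.
intros n k0 k1 k2 r f pr pf [hr hcs].
assert (hc : cos (kn n * f) <> 0) by (intro HH; apply hcs; rewrite HH; ring).
assert (hs : sin (kn n * f) <> 0) by (intro HH; apply hcs; rewrite HH; ring).
assert (hr0 : r <> 0) by lra.
unfold poisson, d_r, d_phi, d_pr, d_pphi, Ja1, P1, Hna.
repeat dstep hr hcs.
alg r n f.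
Qed.

Lemma bJa2 : forall n k0 k1 k2 r f pr pf, Defs.domain n r f pr pf -> poisson (Ja2 n k0 k1 k2) (Hna n k0 k1 k2) r f pr pf = 0.
intros n k0 k1 k2 r f pr pf [hr hcs].
assert (hc : cos (kn n * f) <> 0) by (intro HH; apply hcs; rewrite HH; ring).
assert (hs : sin (kn n * f) <> 0) by (intro HH; apply hcs; rewrite HH; ring).
assert (hr0 : r <> 0) by lra.
unfold poisson, d_r, d_phi, d_pr, d_pphi, Ja2, P2, Hna.
repeat dstep hr hcs.
alg r n f.
Qed.

Definition Mnr n k0 k1 k2 r f p pf :=
  d_r (Ja1 n k0 k1 k2) r f p pf * d_pr (Ja2 n k0 k1 k2) r f p pf
  - d_r (Ja2 n k0 k1 k2) r f p pf * d_pr (Ja1 n k0 k1 k2) r f p pf.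

Lemma sdiff n k0 k1 k2 r f pr pf dl : Defs.domain n r f pr pf ->
  Mnr n k0 k1 k2 r f (pr + 2 * dl) pf - 2 * Mnr n k0 k1 k2 r f (pr + dl) pf
  + Mnr n k0 k1 k2 r f pr pf
  = 8 * kn n * Rpower r n ^ 4 * pf * cos (kn n * f) * sin (kn n * f) / r ^ 2 * dl ^ 2.
Proof.
intros [hr hcs].
assert (hc : cos (kn n * f) <> 0) by (intro HH; apply hcs; rewrite HH; ring).
assert (hs : sin (kn n * f) <> 0) by (intro HH; apply hcs; rewrite HH; ring).
assert (hr0 : r <> 0) by lra.
unfold Mnr, d_r, d_pr, Ja1, Ja2, P1, P2.
repeat dstep hr hcs.
alg r n f.
Qed.

Lemma dJ3 n k0 k1 k2 r f pr pf : Defs.domain n r f pr pf ->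
  d_r (Ja3 n k0 k1 k2) r f pr pf = 0 /\ d_pr (Ja3 n k0 k1 k2) r f pr pf = 0 /\
  d_pphi (Ja3 n k0 k1 k2) r f pr pf = 2 * pf.
Proof.
intros [hr hcs].
assert (hc : cos (kn n * f) <> 0) by (intro HH; apply hcs; rewrite HH; ring).
assert (hs : sin (kn n * f) <> 0) by (intro HH; apply hcs; rewrite HH; ring).
assert (hr0 : r <> 0) by lra.
unfold d_r, d_pr, d_pphi, Ja3.
repeat dstep hr hcs.
repeat split; ring.
Qed.

Lemma dH n k0 k1 k2 r f pr pf : Defs.domain n r f pr pf ->
  d_r (Hna n k0 k1 k2) r f pr pf = (d_r (Ja1 n k0 k1 k2) r f pr pf + d_r (Ja2 n k0 k1 k2) r f pr pf) / 2 /\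
  d_pr (Hna n k0 k1 k2) r f pr pf = (d_pr (Ja1 n k0 k1 k2) r f pr pf + d_pr (Ja2 n k0 k1 k2) r f pr pf) / 2 /\
  d_pphi (Hna n k0 k1 k2) r f pr pf = (d_pphi (Ja1 n k0 k1 k2) r f pr pf + d_pphi (Ja2 n k0 k1 k2) r f pr pf) / 2.
Proof.
intros [hr hcs].
assert (hc : cos (kn n * f) <> 0) by (intro HH; apply hcs; rewrite HH; ring).
assert (hs : sin (kn n * f) <> 0) by (intro HH; apply hcs; rewrite HH; ring).
assert (hr0 : r <> 0) by lra.
unfold d_r, d_pr, d_pphi, Hna, Ja1, Ja2, P1, P2.
repeat dstep hr hcs.
split; [|split]; alg r n f.
Qed.

Lemma cramer n k0 k1 k2 r f pr pf : Defs.domain n r f pr pf ->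
  Mnr n k0 k1 k2 r f pr pf <> 0 -> pf <> 0 -> forall a b c,
  a * d_r (Ja1 n k0 k1 k2) r f pr pf + b * d_r (Ja2 n k0 k1 k2) r f pr pf + c * d_r (Ja3 n k0 k1 k2) r f pr pf = 0 ->
  a * d_pr (Ja1 n k0 k1 k2) r f pr pf + b * d_pr (Ja2 n k0 k1 k2) r f pr pf + c * d_pr (Ja3 n k0 k1 k2) r f pr pf = 0 ->
  a * d_pphi (Ja1 n k0 k1 k2) r f pr pf + b * d_pphi (Ja2 n k0 k1 k2) r f pr pf + c * d_pphi (Ja3 n k0 k1 k2) r f pr pf = 0 ->
  a = 0 /\ b = 0 /\ c = 0.
Proof.
intros hd hM hpf a b c e1 e2 e3.
destruct (dJ3 n k0 k1 k2 r f pr pf hd) as [E1 [E2 E3]].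
rewrite E1 in e1; rewrite E2 in e2; rewrite E3 in e3.
unfold Mnr in hM.
set (A1 := d_r (Ja1 n k0 k1 k2) r f pr pf) in *.
set (A2 := d_r (Ja2 n k0 k1 k2) r f pr pf) in *.
set (B1 := d_pr (Ja1 n k0 k1 k2) r f pr pf) in *.
set (B2 := d_pr (Ja2 n k0 k1 k2) r f pr pf) in *.
assert (ha : a * (A1 * B2 - A2 * B1) = 0).
{ replace (a * (A1 * B2 - A2 * B1)) with (B2 * (a * A1 + b * A2 + c * 0) - A2 * (a * B1 + b * B2 + c * 0)) by ring.
  rewrite e1, e2; ring. }
assert (hb : b * (A1 * B2 - A2 * B1) = 0).
{ replace (b * (A1 * B2 - A2 * B1)) with (A1 * (a * B1 + b * B2 + c * 0) - B1 * (a * A1 + b * A2 + c * 0)) by ring.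
  rewrite e1, e2; ring. }
apply Rmult_integral in ha; destruct ha as [ha|ha]; [|contradiction].
apply Rmult_integral in hb; destruct hb as [hb|hb]; [|contradiction].
subst a b.
assert (hc : c * (2 * pf) = 0) by (rewrite <- e3; ring).
apply Rmult_integral in hc; destruct hc as [hc|hc]; [|lra].
auto.
Qed.

Lemma good_point n k0 k1 k2 r f pr pf eps : Defs.domain n r f pr pf -> n <> 1 -> 0 < eps ->
  exists pr' pf', Rabs (pr' - pr) < eps /\ Rabs (pf' - pf) < eps /\ pf' <> 0 /\
    Mnr n k0 k1 k2 r f pr' pf' <> 0.
Proof.
intros hd hn he.
assert (hpf : exists pf', Rabs (pf' - pf) < eps /\ pf' <> 0).
{ destruct (Req_dec pf 0) as [h|h].
  - exists (eps/2). subst pf. rewrite Rminus_0_r, Rabs_pos_eq by lra. split; lra.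
  - exists pf. rewrite Rminus_eq_0, Rabs_R0. auto. }
destruct hpf as [pf' [hpf1 hpf2]].
destruct hd as [hr hcs].
assert (hd' : Defs.domain n r f pr pf') by (split; auto).
pose proof (sdiff n k0 k1 k2 r f pr pf' (eps/3) hd') as S.
assert (hnz : 8 * kn n * Rpower r n ^ 4 * pf' * cos (kn n * f) * sin (kn n * f) / r ^ 2 * (eps/3) ^ 2 <> 0).
{ assert (hk : kn n <> 0) by (unfold kn; intro; apply hn; lra).
  assert (hx : Rpower r n <> 0) by (apply Rgt_not_eq; apply Rpow_pos).
  assert (hc : cos (kn n * f) <> 0) by (intro HH; apply hcs; rewrite HH; ring).
  assert (hs : sin (kn n * f) <> 0) by (intro HH; apply hcs; rewrite HH; ring).
  unfold Rdiv. repeat apply Rmult_integral_contrapositive_currified; try lra; auto;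
  try (apply pow_nonzero; lra); try (apply pow_nonzero; auto);
  apply Rinv_neq_0_compat; apply pow_nonzero; lra. }
destruct (Req_dec (Mnr n k0 k1 k2 r f pr pf') 0) as [h0|h0].
2: { exists pr, pf'. rewrite Rminus_eq_0, Rabs_R0. auto. }
destruct (Req_dec (Mnr n k0 k1 k2 r f (pr + eps/3) pf') 0) as [h1|h1].
2: { exists (pr + eps/3), pf'. replace (pr + eps/3 - pr) with (eps/3) by ring.
     rewrite Rabs_pos_eq by lra. repeat split; auto; lra. }
exists (pr + 2 * (eps/3)), pf'. replace (pr + 2*(eps/3) - pr) with (2*(eps/3)) by ring.
rewrite Rabs_pos_eq by lra. repeat split; auto; try lra.
Qed.

Theorem mainTheorem2 (n k0 k1 k2 : R) (hn : n <> 1) :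
  constant_of_motion n (Hna n k0 k1 k2) (Ja1 n k0 k1 k2) /\
  constant_of_motion n (Hna n k0 k1 k2) (Ja2 n k0 k1 k2) /\
  constant_of_motion n (Hna n k0 k1 k2) (Ja3 n k0 k1 k2) /\
  functionally_independent3 n (Ja1 n k0 k1 k2) (Ja2 n k0 k1 k2) (Ja3 n k0 k1 k2) /\
  superintegrable n (Hna n k0 k1 k2).
Proof.
split; [intros r f pr pf hd; apply bJa1; exact hd|].
split; [intros r f pr pf hd; apply bJa2; exact hd|].
split; [intros r f pr pf hd; apply bJa3; exact hd|].
split.
- intros r f pr pf hd eps he.
  destruct (good_point n k0 k1 k2 r f pr pf eps hd hn he) as [pr' [pf' [h1 [h2 [h3 h4]]]]].
  destruct hd as [hr hcs].
  exists r, f, pr', pf'. rewrite !Rminus_eq_0, !Rabs_R0.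
  split; [split; auto|]. do 4 (split; [lra|]).
  intros a b c e1 _ e2 e3.
  apply (cramer n k0 k1 k2 r f pr' pf'); auto. split; auto.
- exists (Ja1 n k0 k1 k2), (Ja3 n k0 k1 k2).
  split; [intros r f pr pf hd; apply bJa1; exact hd|].
  split; [intros r f pr pf hd; apply bJa3; exact hd|].
  intros r f pr pf hd eps he.
  destruct (good_point n k0 k1 k2 r f pr pf eps hd hn he) as [pr' [pf' [h1 [h2 [h3 h4]]]]].
  destruct hd as [hr hcs].
  assert (hd' : Defs.domain n r f pr' pf') by (split; auto).
  exists r, f, pr', pf'. rewrite !Rminus_eq_0, !Rabs_R0.
  split; [split; auto|]. do 4 (split; [lra|]).
  intros a b c e1 _ e2 e3.
  destruct (dH n k0 k1 k2 r f pr' pf' hd') as [D1 [D2 D3]].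
  rewrite D1 in e1; rewrite D2 in e2; rewrite D3 in e3.
  destruct (cramer n k0 k1 k2 r f pr' pf' hd' h4 h3 (a/2 + b) (a/2) c) as [q1 [q2 q3]].
  + eapply eq_trans; [|exact e1]; field.
  + eapply eq_trans; [|exact e2]; field.
  + eapply eq_trans; [|exact e3]; field.
  + repeat split; lra.
Qed.
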